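(* Let $G=(V,E)$ be a directed graph, $s\neq t$ vertices and $k$ an integer with $1\le k\le 4$. Then the edge set of the upper-bound graph $SPG^u_k(s,t)$ equals the edge set of $SPG_k(s,t)$.
   Context: A path from $x$ to $y$ in $G$ is a vertex sequence $x=v_0,\dots,v_m=y$ with $(v_{i-1},v_i)\in E$; its length is $m$ and $V(p)$, $E(p)$ are its vertex and edge sets. A simple path has no repeated vertex. $SPG_k(s,t)$ is the subgraph of $G$ formed by the union of vertex sets and edge sets of all simple paths from $s$ to $t$ of length at most $k$. For a vertex $u$ and integer $l\ge 0$, $EV^*_l(s,u)$ exists iff there is at least one simple path from $s$ to $u$ of length at most $l$ not containing $t$, and then $EV^*_l(s,u)$ is the intersection of $V(p)$ over all such paths. Symmetrically, $EV^*_l(v,t)$ exists iff there is at least one simple path from $v$ to $t$ of length at most $l$ not containing $s$, and then it is the intersection of $V(p)$ over all such paths. The upper-bound graph $SPG^u_k(s,t)$ is the subgraph of $G$ whose edges are exactly those $e(u,v)\in E$ for which there exist integers $k_f,k_b\ge 0$ such that $EV^*_{k_f}(s,u)$ and $EV^*_{k_b}(v,t)$ exist, $k_f+1+k_b\le k$, and $EV^*_{k_f}(s,u)\cap EV^*_{k_b}(v,t)=\emptyset$. *)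

(* Defs.v *)
From mathcomp Require Import all_boot.
Set Implicit Arguments. Unset Strict Implicit. Unset Printing Implicit Defensive.

(* A path from x to y is the vertex sequence x :: p (v_0 = x, ..., v_m = y)
   with consecutive vertices joined by edges. *)
Definition is_path (V : finType) (E : rel V) (x y : V) (p : seq V) : bool :=
  path E x p && (last x p == y).

Definition path_len (V : Type) (p : seq V) : nat := size p.

Definition path_vertices (V : Type) (x : V) (p : seq V) : seq V := x :: p.
Definition path_edges (V : Type) (x : V) (p : seq V) : seq (V * V) :=
  zip (x :: p) p.

Definition is_simple_path (V : finType) (E : rel V) (x y : V) (p : seq V) : bool :=
  is_path E x y p && uniq (path_vertices x p).

Definition SPG_edge (V : finType) (E : rel V) (k : nat) (s t u v : V) : Prop :=
  exists p : seq V, [/\ is_simple_path E s t p, path_len p <= k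
                       & (u, v) \in path_edges s p].

Definition fwd_path (V : finType) (E : rel V) (s t u : V) (l : nat) (p : seq V) : bool :=
  [&& is_simple_path E s u p, path_len p <= l & t \notin path_vertices s p].

Definition bwd_path (V : finType) (E : rel V) (s t v : V) (l : nat) (p : seq V) : bool :=
  [&& is_simple_path E v t p, path_len p <= l & s \notin path_vertices v p].

Definition EVf_exists (V : finType) (E : rel V) (s t u : V) (l : nat) : Prop :=
  exists p, fwd_path E s t u l p.
Definition EVb_exists (V : finType) (E : rel V) (s t v : V) (l : nat) : Prop :=
  exists p, bwd_path E s t v l p.

(* EV*_l(s,u) = intersection of V(p) over all forward candidate paths *)
Definition EVf (V : finType) (E : rel V) (s t u : V) (l : nat) (x : V) : Prop :=
  forall p, fwd_path E s t u l p -> x \in path_vertices s p.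
(* EV*_l(v,t) = intersection of V(p) over all backward candidate paths *)
Definition EVb (V : finType) (E : rel V) (s t v : V) (l : nat) (x : V) : Prop :=
  forall p, bwd_path E s t v l p -> x \in path_vertices v p.

Definition SPGu_edge (V : finType) (E : rel V) (k : nat) (s t u v : V) : Prop :=
  E u v /\
  exists kf kb : nat,
    [/\ EVf_exists E s t u kf, EVb_exists E s t v kb, kf + 1 + kb <= k
      & ~ (exists x, EVf E s t u kf x /\ EVb E s t v kb x)].

(* Main.v *)
Require Import Defs.
From mathcomp Require Import all_boot.
From mathcomp Require Import zify.
From Stdlib Require Import Classical.

Lemma size_ge2 (T : eqType) (a x : T) (p : seq T) :
  x \in a :: p -> x != a -> x != last a p -> 1 < size p.
Proof.
case: p => [|y [|z r]] //=; rewrite !inE.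
- by move=> ->.
- by case/orP=> ->; rewrite ?orbT.
Qed.

Lemma edge_in_zip (T : eqType) (s v : T) (p q : seq T) :
  (last s p, v) \in zip (s :: p ++ v :: q) (p ++ v :: q).
Proof.
elim: p s => [|y p IH] s /=; first by rewrite mem_head.
by rewrite in_cons IH orbT.
Qed.

Lemma split_zip (T : eqType) (s u v : T) (p : seq T) :
  (u, v) \in zip (s :: p) p -> exists p1 p2, p = p1 ++ v :: p2 /\ last s p1 = u.
Proof.
elim: p s => [|x p IH] s //=.
rewrite in_cons => /orP [/eqP [-> ->]|H].
- by exists [::], p.
- have [p1 [p2 [-> <-]]] := IH x H.
  by exists (x :: p1), p2.
Qed.

Theorem theorem4p8 (V : finType) (E : rel V) (s t : V) (k : nat) :
  s != t -> 1 <= k <= 4 ->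
  forall u v : V, SPGu_edge E k s t u v <-> SPG_edge E k s t u v.
Proof.
move=> st /andP [k1 k4] u v; split.
- move=> [Euv [kf [kb [_ _ Hk Hno]]]].
  have [p [fp vp]] : exists p, fwd_path E s t u kf p /\ v \notin s :: p.
    apply: NNPP => H; apply: Hno; exists v; split.
    + move=> p' fp; apply: NNPP => vp; apply: H; exists p'; split => //.
      by apply/negP.
    + by move=> q' _; rewrite mem_head.
  have [q [bq uq]] : exists q, bwd_path E s t v kb q /\ u \notin v :: q.
    apply: NNPP => H; apply: Hno; exists u; split.
    + move=> p' /and3P [/andP [/andP [_ /eqP <-] _] _ _].
      by rewrite mem_last.
    + move=> q' bq; apply: NNPP => uq; apply: H; exists q'; split => //.
      by apply/negP.
  move: fp bq => /and3P [/andP [/andP [pp /eqP lp] up] szp tp]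
                 /and3P [/andP [/andP [pq /eqP lq] uqq] szq sq].
  exists (p ++ v :: q); split.
  + rewrite /is_simple_path /is_path cat_path lp /= Euv pq last_cat lp /= lq eqxx /=.
    rewrite pp /= -[_ && uniq _]/(uniq ((s :: p) ++ v :: q)) cat_uniq up uqq andbT.
    apply/hasPn => x xq; apply/negP => xp.
    have xt : x != t by apply: contraNneq tp => <-.
    have xs : x != s by apply: contraNneq sq => <-.
    have xu : x != u by apply: contraNneq uq => <-.
    have xv : x != v by apply: contraNneq vp => <-.
    have h1 : 1 < size p by apply: (@size_ge2 _ s x p xp) => //; rewrite lp.
    have h2 : 1 < size q by apply: (@size_ge2 _ v x q xq) => //; rewrite lq.
    rewrite /path_len in szp szq; clear -h1 h2 szp szq Hk k4; lia.
  + rewrite /path_len size_cat /= in szp szq *; clear -szp szq Hk; lia.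
  + by rewrite /path_edges -{1}lp edge_in_zip.
- move=> [p [/andP [/andP [pp /eqP lp] up] szp ein]].
  have [p1 [p2 [ep lu]]] := @split_zip _ s u v p ein.
  subst p.
  move: pp; rewrite cat_path lu /= => /andP [pp1 /andP [Euv pp2]].
  move: lp; rewrite last_cat lu /= => lt.
  move: up; rewrite /path_vertices -[uniq _]/(uniq ((s :: p1) ++ v :: p2)) cat_uniq => /and3P [u1 dis u2].
  have tin : t \in v :: p2 by rewrite -lt mem_last.
  have sin : s \in s :: p1 by rewrite mem_head.
  split => //; exists (size p1), (size p2); split.
  + exists p1; rewrite /fwd_path /is_simple_path /is_path pp1 lu eqxx u1 leqnn /=.
    apply/negP => tp; move/hasPn: dis => /(_ t tin); by rewrite tp.
  + exists p2; rewrite /bwd_path /is_simple_path /is_path pp2 lt eqxx u2 leqnn /=.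
    apply/negP => sp; move/hasPn: dis => /(_ s sp); by rewrite sin.
  + move: szp; rewrite /path_len size_cat /=; clear; lia.
  + move=> [x [H1 H2]].
    have x1 : x \in s :: p1.
      apply: H1; rewrite /fwd_path /is_simple_path /is_path pp1 lu eqxx u1 leqnn /=.
      apply/negP => tp; move/hasPn: dis => /(_ t tin); by rewrite tp.
    have x2 : x \in v :: p2.
      apply: H2; rewrite /bwd_path /is_simple_path /is_path pp2 lt eqxx u2 leqnn /=.
      apply/negP => sp; move/hasPn: dis => /(_ s sp); by rewrite sin.
    by move/hasPn: dis => /(_ x x2); rewrite x1.
Qed.
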